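(* Let $0\le q\in L_1^{loc}(\mathbb{R})$ with $\int_{-\infty}^{\infty}q(t)\,dt=\infty$, and for $x\in\mathbb{R}$ let $d(x)=\inf\{d>0:\int_{x-d}^{x+d}q(t)\,dt=2\}$. Then the condition $$\lim_{|x|\to\infty}\int_{x-a}^{x+a}q(t)\,dt=\infty\quad\text{for all }a\in(0,\infty)$$ is equivalent to the condition $\lim_{|x|\to\infty}d(x)=0$. *)

(* Defs.v *)
From HB Require Import structures.
From mathcomp Require Import all_boot all_order all_algebra.
From mathcomp Require Import all_classical all_reals all_analysis.
Set Implicit Arguments. Unset Strict Implicit. Unset Printing Implicit Defensive.
Import Order.TTheory GRing.Theory Num.Theory.
Import numFieldNormedType.Exports.
Local Open Scope classical_set_scope.
Local Open Scope ring_scope.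

Definition win_int {R : realType} (q : R -> R) (x a : R) : \bar R :=
  (\int[@lebesgue_measure R]_(t in `[(x - a)%R, (x + a)%R]) (q t)%:E)%E.

Definition dfun {R : realType} (q : R -> R) (x : R) : R :=
  inf [set d : R | 0 < d /\ win_int q x d = 2%:E].

Definition lim_abs_pinfty {R : realType} (f : R -> \bar R) : Prop :=
  forall M : R, exists N : R, forall x : R, N < `|x| -> (M%:E < f x)%E.

Definition lim_abs_zero {R : realType} (f : R -> R) : Prop :=
  forall e : R, 0 < e -> exists N : R, forall x : R, N < `|x| -> `|f x| < e.

(* Main.v *)
Require Import Defs.
From HB Require Import structures.
From mathcomp Require Import all_boot all_order all_algebra.
From mathcomp Require Import all_classical all_reals all_analysis.
From mathcomp Require Import measurable_realfun.
Import Order.TTheory GRing.Theory Num.Theory.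
Import numFieldNormedType.Exports.
Local Open Scope classical_set_scope.
Local Open Scope ring_scope.

Lemma mq_all {R : realType} {q : R -> R} (hl : locally_integrable setT q) (D : set R) :
  measurable_fun D q.
Proof.
case: hl => mq _ _; exact: measurable_funS mq.
Qed.

Lemma int_itv {R : realType} {q : R -> R} (hl : locally_integrable setT q) (u v : R) :
  (@lebesgue_measure R).-integrable `[u, v] (EFin \o q).
Proof.
apply/integrableP; split; first by apply/measurable_EFinP; exact: mq_all.
case: hl => _ _ h; have := h `[u, v]%classic (@subsetT _ _) (@segment_compact _ u v).
by [].
Qed.

Lemma W_ge0 {R : realType} {q : R -> R} (q_ge0 : forall t, 0 <= q t) x a :
  (0 <= win_int q x a)%E.
Proof. by apply: integral_ge0 => t _; rewrite lee_fin. Qed.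

Lemma W_mono {R : realType} {q : R -> R} (q_ge0 : forall t, 0 <= q t)
  (hl : locally_integrable setT q) x a b : a <= b ->
  (win_int q x a <= win_int q x b)%E.
Proof.
move=> ab; apply: ge0_subset_integral => //.
- by apply/measurable_EFinP; exact: mq_all.
- by move=> t _; rewrite lee_fin.
- by apply: subset_itv; rewrite bnd_simp ?lerD2l ?lerN2.
Qed.

Lemma W0 {R : realType} {q : R -> R} x : win_int q x 0 = 0%E.
Proof. by rewrite /win_int subr0 addr0 set_itv1 integral_set1. Qed.

Lemma W_fin {R : realType} {q : R -> R} (hl : locally_integrable setT q) x a :
  win_int q x a = (fine (win_int q x a))%:E.
Proof. by rewrite fineK //; apply: integrable_fin_num => //; exact: int_itv. Qed.
From mathcomp Require Import lra.

Lemma exists_big {R : realType} {q : R -> R} (q_ge0 : forall t, 0 <= q t)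
  (hl : locally_integrable setT q)
  (q_inf : (\int[@lebesgue_measure R]_(t in setT) (q t)%:E)%E = +oo%E) y :
  exists A, 0 <= A /\ (2%:E <= win_int q y A)%E.
Proof.
pose F := fun n : nat => `[y - n%:R, y + n%:R]%classic.
have nd : nondecreasing_seq F.
  move=> m n mn; rewrite subsetEset; apply: subset_itv; rewrite bnd_simp.
    by rewrite lerD2l lerN2 ler_nat.
  by rewrite lerD2l ler_nat.
have cup : \bigcup_n F n = setT.
  apply/seteqP; split => // t _; exists (Num.Def.trunc `|t - y|).+1 => //.
  have := truncnS_gt `|t - y|; set n := (Num.Def.trunc _).+1%:R.
  move=> /ltr_normlP [h1 h2]; rewrite /F /= in_itv /=; apply/andP; split; lra.
have L := @ge0_nondecreasing_set_cvg_integral _ (measurableTypeR R) R F (EFin \o q) (@lebesgue_measure R) nd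
  (fun i => measurable_itv _) (fun i => ltac:(apply/measurable_EFinP; exact: mq_all))
  (fun i x _ => ltac:(rewrite /= lee_fin; exact: q_ge0)).
have E : (\int[@lebesgue_measure R]_(x in \bigcup_i F i) (EFin \o q) x = +oo)%E.
  by rewrite cup; exact: q_inf.
rewrite E in L.
move/cvgeyPge: L => /(_ 2) [N _ HN].
exists N%:R; split => //; exact: HN N (leqnn N).
Qed.

Lemma S_nonempty {R : realType} {q : R -> R} (q_ge0 : forall t, 0 <= q t)
  (hl : locally_integrable setT q)
  (q_inf : (\int[@lebesgue_measure R]_(t in setT) (q t)%:E)%E = +oo%E) y :
  exists d, 0 < d /\ win_int q y d = 2%:E.
Proof.
have [A [A0 HA]] := exists_big q_ge0 hl q_inf y.
pose L := y - A - 1; pose U := y + A + 1.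
pose P := (parameterized_integral (@lebesgue_measure R) L)^~ q.
have LU : L <= U by rewrite /L /U; lra.
have Pc : {within `[L, U], continuous P}.
  exact: (parameterized_integral_continuous LU (int_itv hl L U)).
have Pz : forall z, L < z < U -> {for z, continuous P}.
  move=> z zLU; have := Pc z.
  rewrite /continuous_at -nbhs_subspace_interior //.
  by rewrite interior_itv_bnd /= in_itv /= zLU.
have hW : forall t, 0 <= t <= A -> fine (win_int q y t) = P (y + t) - P (y - t).
  move=> t /andP[t0 tA].
  rewrite /P /parameterized_integral.
  rewrite (@Rintegral_itvB _ q (BLeft L) (BRight (y + t)) (y - t)).
  - rewrite Rintegral_itv_obnd_cbnd //.
    have := int_itv hl (y - t) (y + t); apply: integrableS => //.
    by move=> s; rewrite /= !in_itv /= => /andP[? ?]; apply/andP; split; lra.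
  - exact: int_itv.
  - by rewrite bnd_simp /L; lra.
  - by rewrite bnd_simp; lra.
pose h := fun t => P (y + t) - P (y - t).
have hc : {within `[0, A], continuous h}.
  apply: continuous_in_subspaceT => t; rewrite inE /= in_itv /= => /andP[t0 tA].
  apply: cvgB.
  - apply: (@continuous_comp _ _ _ (fun s => y + s) P).
      exact: (cvgD (cvg_cst y) cvg_id).
    by apply: Pz; apply/andP; split; rewrite /L /U; lra.
  - apply: (@continuous_comp _ _ _ (fun s => y - s) P).
      exact: (cvgB (cvg_cst y) cvg_id).
    by apply: Pz; apply/andP; split; rewrite /L /U; lra.
have h0 : h 0 = 0.
  by rewrite /h -hW ?lexx ?A0 // W0.
have hA : 2 <= h A.
  rewrite /h -hW ?lexx ?A0 //.
  by rewrite -lee_fin -W_fin.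
have [c cA hc2] := @IVT R h 0 A 2 A0 hc ltac:(by rewrite ge_min le_max h0 hA orbT ler0n).
move: cA; rewrite in_itv /= => /andP[c0 cA].
have c0' : 0 < c.
  rewrite lt_neqAle c0 andbT; apply/eqP => c0e.
  by move: hc2; rewrite -c0e h0 => /eqP; rewrite eq_sym pnatr_eq0.
exists c; split => //.
by rewrite W_fin // hW ?c0 ?cA // -/(h c) hc2.
Qed.

Lemma count_lemma {R : realType} {q : R -> R} (q_ge0 : forall t, 0 <= q t)
  (hl : locally_integrable setT q) (u dl : R) (dl0 : 0 < dl) (k : nat) :
  (forall i : nat, (i < k)%N -> (2%:E <= win_int q (u + i%:R * (2 * dl) + dl)%R dl)%E) ->
  (((k%:R * 2)%R)%:E <= \int[@lebesgue_measure R]_(t in `[u, (u + k%:R * (2 * dl))%R]) (q t)%:E)%E.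
Proof.
elim: k => [|k IH] Hk.
  by rewrite mul0r; apply: integral_ge0 => t _; rewrite lee_fin.
have kk : u <= u + k%:R * (2 * dl).
  by rewrite lerDl; apply: mulr_ge0 => //; apply: mulr_ge0 => //; exact: ltW.
have kk1 : u + k%:R * (2 * dl) <= u + k.+1%:R * (2 * dl).
  by rewrite lerD2l ler_wpM2r ?ler_nat //; apply: mulr_ge0 => //; exact: ltW.
rewrite (@itv_bndbnd_setU _ _ (BLeft u) (BRight (u + k%:R * (2 * dl)))); last 2 first.
  by rewrite bnd_simp.
  by rewrite bnd_simp.
rewrite integral_setU //=; last 2 first.
- by apply/measurable_EFinP; exact: mq_all.
- apply/disj_setPS => z [] /=; rewrite !in_itv /= => /andP[_ h1] /andP[h2 _].
  by move: (lt_le_trans h2 h1); rewrite ltxx.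
rewrite integral_itv_obnd_cbnd; last by apply/measurable_EFinP; exact: mq_all.
rewrite -natr1 mulrDl mul1r EFinD; apply: leeD.
  by apply: IH => i ik; apply: Hk; exact: ltnW.
have := Hk k (ltnSn k); rewrite /win_int.
have -> : u + k%:R * (2 * dl) + dl - dl = u + k%:R * (2 * dl) by rewrite addrK.
have -> : u + k%:R * (2 * dl) + dl + dl = u + (k%:R + 1) * (2 * dl).
  by rewrite mulrDl mul1r mulrDl mul1r !addrA.
by rewrite natr1.
Qed.

Theorem lemma1p1 (R : realType) (q : R -> R)
  (q_ge0 : forall t : R, 0 <= q t)
  (q_loc : locally_integrable setT q)
  (q_inf : (\int[@lebesgue_measure R]_(t in setT) (q t)%:E)%E = +oo%E) :
  (forall a : R, 0 < a -> lim_abs_pinfty (fun x => win_int q x a))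
  <-> lim_abs_zero (dfun q).
Proof.
split.
- move=> H e e0.
  have e20 : 0 < e / 2 by lra.
  have [N HN] := H _ e20 2.
  exists N => x xN; have Hx := HN x xN.
  rewrite /dfun; set S := [set d | _].
  have Sle : forall d, S d -> d <= e / 2.
    move=> d [d0 Wd]; rewrite leNgt; apply/negP => ed.
    have := W_mono q_ge0 q_loc x _ _ (ltW ed); rewrite Wd => /(lt_le_trans Hx).
    by rewrite ltxx.
  case: (pselect (S !=set0)) => [ne|emp].
    have lb : lbound S 0 by move=> d [d0 _]; exact: ltW.
    have i0 : 0 <= inf S := lb_le_inf ne lb.
    have [d Sd] := ne.
    have ile : inf S <= d := ge_inf (ex_intro _ 0 lb) Sd.
    rewrite ger0_norm //; have := Sle d Sd; lra.
  have -> : S = set0 by apply/seteqP; split => // y Sy; apply: emp; exists y.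
  by rewrite inf0 normr0.
- move=> H a a0 M.
  pose k := (Num.Def.trunc `|M|).+1.
  have Mk : M < k%:R.
    by apply: le_lt_trans (truncnS_gt `|M|); exact: ler_norm.
  have k0 : 0 < k%:R :> R by rewrite ltr0n.
  pose dl := a / k%:R.
  have dl0 : 0 < dl by apply: divr_gt0.
  have kdl : k%:R * dl = a by rewrite /dl mulrC divfK // gt_eqF.
  have [N HN] := H dl dl0.
  have big : forall y, N < `|y| -> (2%:E <= win_int q y dl)%E.
    move=> y yN.
    have ne : [set d | 0 < d /\ win_int q y d = 2%:E] !=set0.
      have [d [d0 Wd]] := S_nonempty q_ge0 q_loc q_inf y.
      by exists d.
    have := HN y yN => /(le_lt_trans (ler_norm _)) /(inf_lt ne) [d [d0 Wd] ddl].
    by rewrite -Wd; apply: W_mono => //; exact: ltW.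
  exists (N + a) => x xN.
  have Hc := @count_lemma R q q_ge0 q_loc (x - a) dl dl0 k.
  have e : (x - a + k%:R * (2 * dl) = x + a)%R.
    by rewrite mulrCA kdl; lra.
  rewrite e in Hc.
  apply: (lt_le_trans _ (Hc _)).
    by rewrite lte_fin; lra.
  move=> i ik; apply: big.
  set c := (x - a + i%:R * (2 * dl) + dl)%R.
  have ik' : i%:R + 1 <= k%:R :> R by rewrite natr1 ler_nat.
  have i0 : 0 <= i%:R :> R by [].
  have h1 : 0 <= (k%:R - i%:R - 1) * dl by apply: mulr_ge0; lra.
  have h2 : 0 <= i%:R * dl by apply: mulr_ge0; lra.
  have cx : `|x - c| <= a.
    apply/ler_normlP; split; rewrite /c; nra.
  have := ler_normD c (x - c); rewrite [c + _]addrC subrK.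
  lra.
Qed.
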